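(* In the setting described in the context (with any one of the three learning-rate setups (a), (b), (c)), there exist a deterministic constant $C$ and an integer $m_0$ such that for all $m\ge m_0$, $$\|z_{1,m}\|_m\le T_m^2\,C\,\big(\|w_{t_m}-w_*\|_m+1\big).$$
   Context: Setting. $\{Y_t\}_{t\ge0}$ is a Markov chain on a measurable space $\mathcal{Y}$ with transition kernel $P$ and unique stationary distribution $d_{\mathcal{Y}}$, with $\int|P^n(y,y')-d_{\mathcal{Y}}(y')|\,\mathrm{d}y'\le C_A\varrho^n$ for all $y,n$, some $\varrho\in[0,1)$. $H:\mathbb{R}^d\times\mathcal{Y}\to\mathbb{R}^d$, $h(w)=\mathbb{E}_{y\sim d_{\mathcal{Y}}}[H(w,y)]$; for some norm $\|\cdot\|$ and $\kappa\in[0,1)$, $\|h(w)-h(w')\|\le\kappa\|w-w'\|$, with fixed point $w_*$; $\|H(w,y)-H(w',y)\|\le L_h\|w-w'\|$ for all $w,w',y$ and $\sup_y\|H(0,y)\|<\infty$. Iterates: $w_0\in\mathbb{R}^d$, $w_{t+1}=w_t+\alpha_t(H(w_t,Y_{t+1})-w_t)$. Put $G(w,y)=H(w,y)-w$, $g(w)=h(w)-w$. Learning-rate setups with $C_\alpha>0$: (a) $\alpha_t=\frac{C_\alpha}{t+3}$, $T_m=\frac{C_\alpha\ln^{\nu_1}(m+3)}{m+3}$, $\nu_1\in(0,1)$; (b) $\alpha_t=\frac{C_\alpha}{(t+3)^\nu}$, $\nu\in(\frac23,1)$, $T_m=\frac{C_\alpha}{(m+3)^{\nu_2}}$, $\frac12<\nu_2<\frac\nu{2-\nu}$;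 (c) $\alpha_t=\frac{C_\alpha}{(t+3)\ln^\nu(t+3)}$, $\nu\in(0,1)$, $T_m=\frac{C_\alpha}{m+3}$. Anchors: $t_0=0$, $t_{m+1}=\min\{k:\sum_{t=t_m}^{k-1}\alpha_t\ge T_m\}$. Define $z_{1,m}=\sum_{t=t_m}^{t_{m+1}-1}\alpha_t\big(G(w_t,Y_{t+1})-G(w_{t_m},Y_{t+1})\big)$. The norm $\|\cdot\|_m$: fix a norm $\|\cdot\|_s$ such that $\frac12\|\cdot\|_s^2$ is smooth w.r.t. $\|\cdot\|_s$ and $\xi>0$; $\|\cdot\|_m$ is the norm with $\frac12\|w\|_m^2=\inf_u\{\frac12\|u\|^2+\frac1{2\xi}\|w-u\|_s^2\}$. *)

(* Defs.v *)
From HB Require Import structures.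
From mathcomp Require Import all_boot all_order all_algebra.
From mathcomp Require Import all_classical all_reals all_analysis.
Set Implicit Arguments. Unset Strict Implicit. Unset Printing Implicit Defensive.
Import Order.TTheory GRing.Theory Num.Theory.
Import numFieldNormedType.Exports.
Local Open Scope classical_set_scope.
Local Open Scope ring_scope.

Section Defs.
Context {R : realType}.

Definition is_norm (d : nat) (N : 'rV[R]_d -> R) : Prop :=
  [/\ forall x y, N (x + y) <= N x + N y,
      forall (a : R) x, N (a *: x) = `|a| * N x,
      forall x, 0 <= N x
    & forall x, N x = 0 -> x = 0].

Definition smooth_wrt (d : nat) (f : 'rV[R]_d -> R) (Ns : 'rV[R]_d -> R) : Prop :=
  exists L : R, forall x, differentiable f x /\
    forall y, f y <= f x + ('d f x) (y - x) + L / 2 * Ns (y - x) ^+ 2.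

(* the norm ||.||_m : 1/2 ||w||_m^2 = inf_u {1/2 ||u||^2 + 1/(2 xi) ||w-u||_s^2} *)
Definition moreau_norm (d : nat) (N Ns : 'rV[R]_d -> R) (xi : R) (w : 'rV[R]_d) : R :=
  Num.sqrt (2 * inf (range (fun u : 'rV[R]_d =>
      N u ^+ 2 / 2 + Ns (w - u) ^+ 2 / (2 * xi)))).

Definition nat3 (t : nat) : R := t%:R + 3.

Definition lr_setup (Ca : R) (alpha T : nat -> R) : Prop :=
  (exists nu1 : R, 0 < nu1 < 1 /\
     (forall t, alpha t = Ca / nat3 t) /\
     (forall m, T m = Ca * (ln (nat3 m) `^ nu1) / nat3 m))
  \/
  (exists nu nu2 : R, 2 / 3 < nu < 1 /\ 1 / 2 < nu2 < nu / (2 - nu) /\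
     (forall t, alpha t = Ca / (nat3 t `^ nu)) /\
     (forall m, T m = Ca / (nat3 m `^ nu2)))
  \/
  (exists nu : R, 0 < nu < 1 /\
     (forall t, alpha t = Ca / (nat3 t * ln (nat3 t) `^ nu)) /\
     (forall m, T m = Ca / nat3 m)).

Definition is_anchors (alpha T : nat -> R) (tm : nat -> nat) : Prop :=
  tm 0%N = 0%N /\
  forall m, T m <= \sum_(tm m <= t < tm m.+1) alpha t /\
    forall k, T m <= \sum_(tm m <= t < k) alpha t -> (tm m.+1 <= k)%N.

Fixpoint iterates (d : nat) (Yt : Type) (H : 'rV[R]_d -> Yt -> 'rV[R]_d)
    (alpha : nat -> R) (w0 : 'rV[R]_d) (y : nat -> Yt) (t : nat) : 'rV[R]_d :=
  match t with
  | 0%N => w0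
  | t'.+1 => let wt := iterates H alpha w0 y t' in
             wt + alpha t' *: (H wt (y t'.+1) - wt)
  end.

Definition Gf (d : nat) (Yt : Type) (H : 'rV[R]_d -> Yt -> 'rV[R]_d) w y := H w y - w.

Definition z1 (d : nat) (Yt : Type) (H : 'rV[R]_d -> Yt -> 'rV[R]_d)
    (alpha : nat -> R) (w0 : 'rV[R]_d) (tm : nat -> nat) (y : nat -> Yt) (m : nat)
    : 'rV[R]_d :=
  let w := iterates H alpha w0 y in
  \sum_(tm m <= t < tm m.+1)
     alpha t *: (Gf H (w t) (y t.+1) - Gf H (w (tm m)) (y t.+1)).

Local Open Scope ereal_scope.

Fixpoint kpow (dY : measure_display) (Yt : measurableType dY)
    (P : R.-ker Yt ~> Yt) (n : nat) (y : Yt) (A : set Yt) : \bar R :=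
  match n with
  | 0%N => \d_y A
  | n'.+1 => \int[P y]_z kpow P n' z A
  end.

Definition stationary (dY : measure_display) (Yt : measurableType dY)
    (P : R.-ker Yt ~> Yt) (q : probability Yt R) : Prop :=
  forall A, measurable A -> q A = \int[q]_y P y A.

Definition markov_chain (dO : measure_display) (Om : measurableType dO)
    (Pr : probability Om R) (dY : measure_display) (Yt : measurableType dY)
    (P : R.-ker Yt ~> Yt) (Y : nat -> Om -> Yt) : Prop :=
  (forall t, measurable_fun setT (Y t)) /\
  forall (n : nat) (A : nat -> set Yt), (forall i, measurable (A i)) ->
    Pr [set om | forall i, (i <= n.+1)%N -> A i (Y i om)] =
    \int[Pr]_(om in [set om | forall i, (i <= n)%N -> A i (Y i om)]) P (Y n om) (A n.+1).

End Defs.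

(* Main.v *)
Require Import Defs.
From HB Require Import structures.
From mathcomp Require Import all_boot all_order all_algebra.
From mathcomp Require Import all_classical all_reals all_analysis.
From mathcomp Require Import lra ring.
Import Order.TTheory GRing.Theory Num.Theory.
Import numFieldNormedType.Exports.
Local Open Scope classical_set_scope.
Local Open Scope ring_scope.

Section Aux.
Context {R : realType}.

Lemma lip_cont d (f : 'rV[R]_d -> R) c : 0 < c ->
  (forall x y, `|f x - f y| <= c * `|x - y|) -> continuous f.
Proof.
move=> c0 Hf x; apply/(@cvgrPdist_le _ _ _ (nbhs x) (nbhs_filter x)) => /= e e0.

apply/(@nbhs_normP R (matrix R 1 d) x); exists (e / c); first by rewrite /= divr_gt0.
move=> y /= Hy.
apply: (le_trans (Hf x y)); rewrite -ler_pdivlMl// mulrC; exact: ltW.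
Qed.

Lemma mx_coord_le d (x : 'rV[R]_d) i : `|x 0 i| <= `|x|.
Proof.
have /mapP[j Hj ->] : `|x 0 i| \in [seq `|x k.1 k.2| | k : 'I_1 * 'I_d].
  by apply/mapP; exists (ord0, i) => //=; rewrite mem_enum.
by rewrite [leRHS]/Num.Def.normr /= mx_normrE; apply/bigmax_geP; right => /=; exists j.
Qed.

Context {d : nat} {N : 'rV[R]_d -> R} (hN : is_norm N).

Lemma N0 : N 0 = 0.
Proof. case: hN => _ hZ _ _. by rewrite -(scale0r 0) hZ normr0 mul0r. Qed.

Lemma NN x : N (- x) = N x.
Proof. case: hN => _ hZ _ _. by rewrite -scaleN1r hZ normrN normr1 mul1r. Qed.

Lemma NB x y : N (x - y) = N (y - x).
Proof. by rewrite -NN opprB. Qed.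

Lemma Nge0 x : 0 <= N x.
Proof. by case: hN. Qed.

Lemma NT x y : N (x + y) <= N x + N y.
Proof. by case: hN. Qed.

Lemma NZ a x : N (a *: x) = `|a| * N x.
Proof. by case: hN. Qed.

Lemma Nsum (I : Type) (r : seq I) (P : pred I) (F : I -> 'rV[R]_d) :
  N (\sum_(i <- r | P i) F i) <= \sum_(i <- r | P i) N (F i).
Proof.
elim/big_rec2: _ => [|i y1 y2 _ Hy]; first by rewrite N0.
exact: le_trans (NT _ _) (lerD (lexx _) Hy).
Qed.

Lemma N_upper : exists c, 0 < c /\ forall x, N x <= c * `|x|.
Proof.
exists (\sum_(j < d) N (delta_mx 0 j) + 1); split.
  by apply: ltr_wpDl => //; apply: sumr_ge0 => j _; exact: Nge0.
move=> x; rewrite {1}(row_sum_delta x).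

apply: le_trans (Nsum _ _ _ _) _.
rewrite mulrDl mul1r; apply: ler_wpDr; first exact: normr_ge0.
rewrite mulr_suml; apply: ler_sum => j _; rewrite NZ mulrC.
by apply: ler_wpM2l; [exact: Nge0 | exact: mx_coord_le].
Qed.

Lemma N_cont : continuous N.
Proof.
have [c [c0 Hc]] := N_upper.
apply: (@lip_cont d N c c0) => x y.
have h1 := NT (x - y) y; rewrite subrK in h1.
have h2 := NT (y - x) x; rewrite subrK in h2.
have h3 := Hc (x - y).
have h4 := Hc (y - x); rewrite -normrN opprB in h4.
rewrite ler_norml; apply/andP; split; lra.
Qed.

Lemma unit_vec (x : 'rV[R]_d) : x != 0 -> `| `|x|^-1 *: x | = 1.
Proof.
move=> x0; rewrite normrZ ger0_norm ?invr_ge0// mulVf// normr_eq0//.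
Qed.

Lemma N_lower : exists a, 0 < a /\ forall x, a * `|x| <= N x.
Proof.
pose A := [set x : 'rV[R]_d | `|x| = 1].
case: (pselect (A !=set0)) => [A0|A0]; last first.
  exists 1; split => // x; have [->|x0] := eqVneq x 0.
    by rewrite normr0 mulr0 N0.
  by exfalso; apply: A0; exists (`|x|^-1 *: x); rewrite /A /= unit_vec.
have bA : bounded_set A.
  rewrite /= /bounded_near.
  apply: filterS (@nbhs_pinfty_ge R 1 _); last exact: num_real.
  by move=> M M1 x /= ->.
have cA : closed A.
  have -> : A = (fun x : 'rV[R]_d => `|x|) @^-1` [set 1] by [].
  apply: preimage_closed; last exact: closed_eq.
  by move=> x _; exact: norm_continuous.
have cpA : compact A by exact: bounded_closed_compact.
have Ncw : {within A, continuous N}.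
  by apply: continuous_subspaceT; exact: N_cont.
have [c cA' Hc] := EVT_min_rV A0 cpA Ncw.
have c1 : `|c| = 1 by move: cA'; rewrite inE.
have c0 : c != 0 by apply/eqP => c0; move: c1; rewrite c0 normr0 => /eqP; rewrite eq_sym oner_eq0.
exists (N c); split.
  case: hN => _ _ _ h4; rewrite lt_def Nge0 andbT; apply/eqP => /h4 /eqP; exact/negP.
move=> x; have [->|x0] := eqVneq x 0; first by rewrite normr0 mulr0 N0.
have := Hc (`|x|^-1 *: x); rewrite inE /A /= unit_vec// => /(_ erefl).
rewrite NZ ger0_norm ?invr_ge0// => H.
by rewrite -ler_pdivlMr ?normr_gt0// mulrC.
Qed.

End Aux.

Section Moreau.
Context {R : realType} {d : nat} (N Ns : 'rV[R]_d -> R) (xi : R).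
Hypotheses (hN : is_norm N) (hNs : is_norm Ns) (xi0 : 0 < xi).

Let F w := fun u : 'rV[R]_d => N u ^+ 2 / 2 + Ns (w - u) ^+ 2 / (2 * xi).

Lemma F_ge0 w u : 0 <= F w u.
Proof. by rewrite /F addr_ge0 // divr_ge0 // ?sqr_ge0 // mulr_ge0 // ltW. Qed.

Lemma moreau_le w : moreau_norm N Ns xi w <= N w.
Proof.
rewrite /moreau_norm -/(F w).
have lb : has_lbound (range (F w)) by exists 0 => _ [u _ <-]; exact: F_ge0.
have H := ge_inf lb (ex_intro2 _ _ w I erefl).
rewrite /F subrr (N0 hNs) expr0n /= mul0r addr0 in H.
rewrite -(ger0_norm (Nge0 hN w)) -sqrtr_sqr ler_wsqrtr //.
by rewrite -ler_pdivlMl // mulrC.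
Qed.

Lemma moreau_ge : exists k, 0 < k /\ forall w, N w <= k * moreau_norm N Ns xi w.
Proof.
have [c [c0 Hc]] := N_upper hN.
have [a [a0 Ha]] := N_lower hNs.
pose b := c / a.
have b0 : 0 < b by rewrite divr_gt0.
have Hb : forall x, N x <= b * Ns x.
  move=> x; apply: le_trans (Hc x) _; rewrite /b -mulrA ler_pM2l //.
  by rewrite ler_pdivlMl // mulrC.
pose K := 4 + 4 * b ^+ 2 * xi.
have bb : 0 <= b ^+ 2 * xi by rewrite mulr_ge0 // ?sqr_ge0 // ltW.
have K0 : 0 < K by rewrite /K; lra.
exists (Num.sqrt (K / 2)); split; first by rewrite sqrtr_gt0 divr_gt0.
move=> w; rewrite /moreau_norm -/(F w).
have ne : range (F w) !=set0 by exists (F w 0), 0.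
have H : N w ^+ 2 / K <= inf (range (F w)).
  apply: lb_le_inf => // _ [u _ <-].
  rewrite ler_pdivrMr // /F.
  have h1 : N w <= N u + b * Ns (w - u).
    have := NT hN u (w - u); rewrite addrC subrK => h.
    by apply: le_trans h _; rewrite lerD2l.
  have g1 := Nge0 hN u; have g2 := Nge0 hNs (w - u); have g3 := Nge0 hN w.
  have e1 : N w ^+ 2 <= (N u + b * Ns (w - u)) ^+ 2.
    by rewrite ler_sqr ?nnegrE // addr_ge0 // mulr_ge0 // ltW.
  apply: le_trans e1 _.
  rewrite /K.
  set p := N u; set q := Ns (w - u).
  have -> : (p ^+ 2 / 2 + q ^+ 2 / (2 * xi)) * (4 + 4 * b ^+ 2 * xi)
    = 2 * p ^+ 2 + 2 * b^+2 * q ^+ 2 + (2 * b ^+ 2 * xi * p ^+ 2 + 2 / xi * q ^+ 2).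
    by field; rewrite gt_eqF.
  have r1 : 0 <= 2 * b ^+ 2 * xi * p ^+ 2 + 2 / xi * q ^+ 2.
    have t1 : 0 <= 2 * b ^+ 2 * xi * p ^+ 2.
      by apply: mulr_ge0; [apply: mulr_ge0; [apply: mulr_ge0; [|exact: sqr_ge0]|exact: ltW]|exact: sqr_ge0].
    have t2 : 0 <= 2 / xi * q ^+ 2.
      by apply: mulr_ge0; [apply: divr_ge0; [|exact: ltW]|exact: sqr_ge0].
    lra.

  have r2 : 0 <= (p - b * q) ^+ 2 by exact: sqr_ge0.
  nra.
rewrite -(ger0_norm (Nge0 hN w)) -sqrtr_sqr -sqrtrM; last by rewrite divr_ge0 // ltW.
rewrite ler_wsqrtr //.
have -> : K / 2 * (2 * inf (range (F w))) = K * inf (range (F w)).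
  by field.
by rewrite -ler_pdivrMl // mulrC.
Qed.

End Moreau.

Section LR.
Context {R : realType}.

Lemma nat3_ge3 t : 3 <= nat3 t :> R.
Proof. by rewrite /nat3 lerDr. Qed.

Lemma nat3_gt0 t : 0 < nat3 t :> R.
Proof. by apply: lt_le_trans (nat3_ge3 t); lra. Qed.

Lemma nat3_le {m t} : (m <= t)%N -> nat3 m <= nat3 t :> R.
Proof. by move=> mt; rewrite /nat3 lerD2r ler_nat. Qed.

Lemma ln3_gt0 t : 0 < ln (nat3 t : R).
Proof. by apply: ln_gt0; apply: lt_le_trans (nat3_ge3 t); lra. Qed.

Lemma expR1_le4 : expR 1 <= 4 :> R.
Proof.
have h1 : expR (1/2) * expR (- (1/2)) = 1 :> R by rewrite expRxMexpNx_1.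
have h2 := expR_ge1Dx (- (1/2) : R).
have h3 : 0 < expR (1/2) :> R by exact: expR_gt0.
have h4 : expR (1/2) <= 2 :> R by nra.
have -> : (1 : R) = 1/2 * 2%:R by field.
rewrite expRM_natr.
have h5 : expR (1/2) ^+ 2 <= 2 ^+ 2 :> R by rewrite ler_sqr ?nnegrE // ltW.
by apply: le_trans h5 _; lra.
Qed.

Lemma ln3_ge1 {t} : (1 <= t)%N -> 1 <= ln (nat3 t : R).
Proof.
move=> t1.
have e0 : 0 < expR 1 :> R by exact: expR_gt0.
rewrite -[X in X <= _](expRK 1) ler_ln ?posrE ?nat3_gt0 //.

apply: le_trans expR1_le4 _; have := @nat3_le 1 t t1; rewrite /nat3 => h; lra.
Qed.

Lemma ln_le_sqrt (x : R) : 0 < x -> ln x <= 2 * Num.sqrt x.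
Proof.
move=> x0; have s0 : 0 < Num.sqrt x by rewrite sqrtr_gt0.
have e : ln x = ln (Num.sqrt x) + ln (Num.sqrt x).
  by rewrite -lnM ?posrE // -expr2 sqr_sqrtr // ltW.
rewrite e; have := ln_sublinear s0; lra.
Qed.

Lemma div_mono {c a b : R} : 0 < c -> 0 < b -> b <= a -> c / a <= c / b.
Proof.
move=> c0 b0 ba; rewrite ler_pM2l // lef_pV2 ?posrE //; exact: lt_le_trans ba.
Qed.

Lemma pow_ge1 {a r : R} : 1 <= a -> 0 <= r -> 1 <= a `^ r.
Proof. by move=> a1 r0; rewrite -(powRr0 a) ler_powR. Qed.

Lemma lr_facts (Ca : R) alpha T : 0 < Ca -> lr_setup Ca alpha T ->
  [/\ forall t, 0 < alpha t, forall m, 0 < T m,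
      forall m t, (1 <= m)%N -> (m <= t)%N -> alpha t <= T m
    & forall m, (1 <= m)%N -> T m ^+ 2 * nat3 m <= 4 * Ca ^+ 2].
Proof.
move=> Ca0 [[nu [/andP[nu0 nu1] [ha hT]]]|[[nu [nu2 [/andP[nu0 nu1] [/andP[nu20 nu21] [ha hT]]]]]|[nu [/andP[nu0 nu1] [ha hT]]]]].
-
  split.
  + by move=> t; rewrite ha divr_gt0 // nat3_gt0.
  + by move=> m; rewrite hT divr_gt0 ?nat3_gt0 // mulr_gt0 // powR_gt0 // ln3_gt0.
  + move=> m t m1 mt; rewrite ha hT.
    apply: le_trans (@div_mono Ca _ _ Ca0 (nat3_gt0 m) (@nat3_le m t mt)) _.
    rewrite ler_pM2r ?invr_gt0 ?nat3_gt0 // ler_peMr ?(ltW Ca0) //.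
    exact: pow_ge1 (ln3_ge1 m1) (ltW nu0).
  + move=> m m1; rewrite hT.
    set x := nat3 m; set p := ln x `^ nu.
    have x0 : 0 < x := nat3_gt0 m.
    have p0 : 0 <= p := powR_ge0 _ _.
    have pL : p <= ln x by apply: ler1_powR; [exact: ln3_ge1|exact: ltW].
    have L2 := @ln_le_sqrt x x0.
    have p2 : p ^+ 2 <= 4 * x.
      have -> : 4 * x = (2 * Num.sqrt x) ^+ 2 by rewrite exprMn sqr_sqrtr ?ltW //; ring.
      rewrite ler_sqr ?nnegrE //.
      exact: le_trans pL L2.
    have -> : (Ca * p / x) ^+ 2 * x = Ca ^+ 2 * p ^+ 2 / x.
      by field; rewrite gt_eqF.
    rewrite ler_pdivrMr //; have c2 : 0 <= Ca ^+ 2 := sqr_ge0 Ca.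
    have := ler_wpM2l c2 p2; lra.
-
  have nu_le : nu2 <= nu.
    apply: (le_trans (ltW nu21)); rewrite ler_pdivrMr; last by lra.
    nra.
  split.
  + by move=> t; rewrite ha divr_gt0 // powR_gt0 // nat3_gt0.
  + by move=> m; rewrite hT divr_gt0 // powR_gt0 // nat3_gt0.
  + move=> m t m1 mt; rewrite ha hT.
    apply: div_mono => //; first by rewrite powR_gt0 // nat3_gt0.
    apply: (@le_trans _ _ (nat3 m `^ nu)).
      by apply: ler_powR => //; apply: le_trans (nat3_ge3 m); lra.
    apply: ge0_ler_powR; first lra.
    - exact: (ltW (nat3_gt0 _)).
    - exact: (ltW (nat3_gt0 _)).
    - exact: nat3_le.
  + move=> m m1; rewrite hT.
    set x := nat3 m.
    have x0 : 0 < x := nat3_gt0 m.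
    have x1 : 1 <= x by apply: le_trans (nat3_ge3 m); lra.
    have q0 : 0 < x `^ nu2 by rewrite powR_gt0.
    have e : (x `^ nu2) ^+ 2 = x `^ (nu2 * 2) by rewrite powRrM powR_mulrn // ltW.
    have q2 : x <= (x `^ nu2) ^+ 2 by rewrite e le1r_powR //; lra.
    have -> : (Ca / x `^ nu2) ^+ 2 * x = Ca ^+ 2 * (x / (x `^ nu2) ^+ 2).
      by field; rewrite gt_eqF.
    have h : x / (x `^ nu2) ^+ 2 <= 1 by rewrite ler_pdivrMr ?exprn_gt0 // mul1r.
    have c2 : 0 < Ca ^+ 2 by rewrite exprn_gt0.
    have := ler_wpM2l (ltW c2) h; rewrite mulr1 => h'; apply: le_trans h' _; lra.
-
  split.
  + by move=> t; rewrite ha divr_gt0 // mulr_gt0 ?nat3_gt0 // powR_gt0 // ln3_gt0.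
  + by move=> m; rewrite hT divr_gt0 // nat3_gt0.
  + move=> m t m1 mt; rewrite ha hT.
    apply: div_mono => //; first exact: nat3_gt0.
    apply: le_trans (@nat3_le m t mt) _.
    rewrite ler_peMr //; first exact: (ltW (nat3_gt0 _)).
    apply: pow_ge1; [apply: ln3_ge1; exact: leq_trans mt|lra].
  + move=> m m1; rewrite hT.
    set x := nat3 m.
    have x0 : 0 < x := nat3_gt0 m.
    have x1 : 1 <= x by apply: le_trans (nat3_ge3 m); lra.
    have -> : (Ca / x) ^+ 2 * x = Ca ^+ 2 / x by field; rewrite gt_eqF.
    have c2 : 0 < Ca ^+ 2 by rewrite exprn_gt0.
    rewrite ler_pdivrMr //; nra.
Qed.

End LR.

Section Iter.
Context {R : realType} {d : nat} {Yt : Type} (H : 'rV[R]_d -> Yt -> 'rV[R]_d)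
  (alpha : nat -> R) (w0 : 'rV[R]_d) (y : nat -> Yt) (N : 'rV[R]_d -> R)
  (hN : is_norm N) (wstar : 'rV[R]_d) (Lh B : R)
  (HL : forall w w' y, N (H w y - H w' y) <= Lh * N (w - w'))
  (HB : forall y, N (H 0 y) <= B)
  (apos : forall t, 0 <= alpha t).

Let w := iterates H alpha w0 y.
Let L := `|Lh| + 1.
Let B2 := `|Lh| * N wstar + Num.max B 0 + N wstar.

Lemma L_gt0 : 0 < L.
Proof. by rewrite /L ltr_wpDl. Qed.

Lemma B2_ge0 : 0 <= B2.
Proof.
rewrite /B2 !addr_ge0 // ?mulr_ge0 // ?(Nge0 hN) //; by rewrite le_max lexx orbT.
Qed.

Lemma HL' v v' y' : N (H v y' - H v' y') <= `|Lh| * N (v - v').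
Proof. apply: le_trans (HL _ _ _) _; apply: ler_wpM2r; [exact: Nge0|exact: ler_norm]. Qed.

Lemma wS t : w t.+1 = w t + alpha t *: Gf H (w t) (y t.+1).
Proof. by []. Qed.

Lemma w_tele a t : (a <= t)%N ->
  w t - w a = \sum_(a <= s < t) alpha s *: Gf H (w s) (y s.+1).
Proof.
elim: t => [|t IH].
  by rewrite leqn0 => /eqP ->; rewrite subrr big_geq.
rewrite leq_eqVlt => /orP[/eqP <-|]; first by rewrite subrr big_geq.
rewrite ltnS => at_; rewrite big_nat_recr //= -IH // wS; by rewrite addrAC.
Qed.

Lemma G_bound v y' : N (Gf H v y') <= L * N (v - wstar) + B2.
Proof.
have e : Gf H v y' = (H v y' - H wstar y') + (H wstar y' - H 0 y') + H 0 y'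
   - (v - wstar) - wstar by rewrite /Gf; apply/rowP => i; rewrite !mxE; ring.
rewrite e.
have t1 := NT hN (H v y' - H wstar y' + (H wstar y' - H 0 y') + H 0 y' - (v - wstar)) (- wstar).
have t2 := NT hN (H v y' - H wstar y' + (H wstar y' - H 0 y') + H 0 y') (- (v - wstar)).
have t3 := NT hN (H v y' - H wstar y' + (H wstar y' - H 0 y')) (H 0 y').
have t4 := NT hN (H v y' - H wstar y') (H wstar y' - H 0 y').
have h1 := HL' v wstar y'.
have h2 := HL' wstar 0 y'; rewrite subr0 in h2.
have h3 := HB y'.
have h4 : B <= Num.max B 0 by rewrite le_max lexx.
rewrite !(NN hN) in t1 t2.
rewrite /L /B2; lra.
Qed.

Lemma G_diff v v' y' : N (Gf H v y' - Gf H v' y') <= L * N (v - v').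
Proof.
have e : Gf H v y' - Gf H v' y' = (H v y' - H v' y') + (- (v - v')) by rewrite /Gf; apply/rowP => i; rewrite !mxE; ring.
rewrite e; apply: le_trans (NT hN _ _) _; rewrite NN //.
have := HL' v v' y'; rewrite /L; lra.
Qed.

Let S a t := \sum_(a <= s < t) alpha s.

Lemma S_ge0 a t : 0 <= S a t.
Proof. by apply: sumr_ge0 => i _. Qed.

Lemma S_mono a t b : (a <= t)%N -> (t <= b)%N -> S a t <= S a b.
Proof.
move=> at_ tb; rewrite /S [X in _ <= X](@big_cat_nat _ _ _ t) //= -[X in X <= _]addr0 lerD2l.
by apply: sumr_ge0 => i _.
Qed.

Lemma D_ge0 a : 0 <= N (w a - wstar) + B2 / L.
Proof. by rewrite addr_ge0 ?(Nge0 hN) // divr_ge0 ?B2_ge0 // ltW // L_gt0. Qed.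

Lemma drift a b : L * S a b <= 1/2 -> forall t, (a <= t)%N -> (t <= b)%N ->
  N (w t - w a) <= 2 * L * S a t * (N (w a - wstar) + B2 / L).
Proof.
move=> hS; set D := N (w a - wstar) + B2 / L.
have L0 := L_gt0; have D0 : 0 <= D := D_ge0 a.
suff H' : forall n t, (a <= t)%N -> (t <= b)%N -> (t <= a + n)%N ->
    N (w t - w a) <= 2 * L * S a t * D.
  by move=> t at_ tb; apply: (H' t t) => //; exact: leq_addl.
elim=> [|n IH] t at_ tb tn.
  have -> : t = a by rewrite addn0 in tn; apply/eqP; rewrite eqn_leq tn at_.
  by rewrite subrr (N0 hN) /S big_geq // mulr0 mul0r.
rewrite w_tele //.
apply: le_trans (Nsum hN _ _ _ _) _.
have step : forall s, (a <= s < t)%N ->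
    N (alpha s *: Gf H (w s) (y s.+1)) <= alpha s * (2 * L * D).
  move=> s /andP[as_ st].
  rewrite (NZ hN) ger0_norm //; apply: ler_wpM2l => //.
  apply: le_trans (G_bound _ _) _.
  have hs : N (w s - w a) <= 2 * L * S a s * D.
    by apply: IH => //; [exact: ltnW (leq_trans st tb)| rewrite -ltnS -addnS; exact: leq_trans st tn].
  have t1 := NT hN (w s - w a) (w a - wstar).
  rewrite addrA subrK in t1.
  have LS : L * S a s <= 1/2.
    apply: le_trans hS; rewrite ler_pM2l //; apply: S_mono => //.
    exact: ltnW (leq_trans st tb).
  have e : B2 = L * (B2 / L) by field; rewrite gt_eqF.
  have k : L * N (w s - wstar) + B2 <= L * (N (w s - w a) + D).
    have k1 := ler_wpM2l (ltW L0) t1. rewrite /D mulrDr mulrDr -e; lra.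
  apply: le_trans k _.
  have hh : 2 * L * S a s * D <= D.
    have : 2 * L * S a s <= 1 by lra.
    by move=> h; rewrite -[X in _ <= X]mul1r ler_wpM2r.
  have hx : N (w s - w a) + D <= D + D by lra.
  have := ler_wpM2l (ltW L0) hx; lra.
apply: le_trans (ler_sum_nat step) _.
rewrite -mulr_suml -/(S a t); lra.
Qed.

Lemma main_est a b : (a <= b)%N -> L * S a b <= 1/2 ->
  N (\sum_(a <= t < b) alpha t *: (Gf H (w t) (y t.+1) - Gf H (w a) (y t.+1)))
  <= 2 * L ^+ 2 * S a b ^+ 2 * (N (w a - wstar) + B2 / L).
Proof.
move=> ab hS; set D := N (w a - wstar) + B2 / L.
have L0 := L_gt0; have D0 : 0 <= D := D_ge0 a.
apply: le_trans (Nsum hN _ _ _ _) _.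
have step : forall t, (a <= t < b)%N ->
    N (alpha t *: (Gf H (w t) (y t.+1) - Gf H (w a) (y t.+1)))
    <= alpha t * (2 * L ^+ 2 * S a b * D).
  move=> t /andP[at_ tb].
  rewrite (NZ hN) ger0_norm //; apply: ler_wpM2l => //.
  apply: le_trans (G_diff _ _ _) _.
  have h := @drift a b hS t at_ (ltnW tb).
  have h2 : S a t <= S a b by apply: S_mono => //; exact: ltnW.
  have h3 : 2 * L * S a t * D <= 2 * L * S a b * D.
    by rewrite ler_wpM2r // ler_pM2l // mulr_gt0.
  have := ler_wpM2l (ltW L0) (le_trans h h3).
  rewrite expr2; lra.
apply: le_trans (ler_sum_nat step) _.
rewrite -mulr_suml -/(S a b) !expr2; lra.
Qed.

End Iter.

Section Anchor.
Context {R : realType} (alpha T : nat -> R) (tm : nat -> nat)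
  (apos : forall t, 0 < alpha t) (Tpos : forall m, 0 < T m)
  (aT : forall m t, (1 <= m)%N -> (m <= t)%N -> alpha t <= T m)
  (hanc : is_anchors alpha T tm).

Lemma tm_lt m : (tm m < tm m.+1)%N.
Proof.
case: hanc => _ /(_ m) [h1 _]; rewrite ltnNge; apply/negP => hle.
by move: h1; rewrite big_geq // => h; have := Tpos m; rewrite ltNge h.
Qed.

Lemma tm_ge m : (m <= tm m)%N.
Proof.
elim: m => [|m IH] //; exact: leq_ltn_trans IH (tm_lt m).
Qed.

Lemma S_le2T m : (1 <= m)%N -> \sum_(tm m <= t < tm m.+1) alpha t <= 2 * T m.
Proof.
move=> m1.
have hlt := tm_lt m.
have hb : tm m.+1 = (tm m.+1).-1.+1 by rewrite prednK // (leq_ltn_trans (leq0n _) hlt).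
set k := (tm m.+1).-1.
have hk : (tm m <= k)%N by rewrite -ltnS -hb.
rewrite hb big_nat_recr //=.
have h1 : \sum_(tm m <= i < k) alpha i < T m.
  rewrite ltNge; apply/negP => h.
  case: hanc => _ /(_ m) [_ /(_ k h)]; rewrite hb ltnn //.
have h2 : alpha k <= T m by apply: aT => //; exact: leq_trans (tm_ge m) hk.
lra.
Qed.

End Anchor.

Theorem lemma5 (R : realType) (d : nat)
  (dO : measure_display) (Om : measurableType dO) (Pr : probability Om R)
  (dY : measure_display) (Yt : measurableType dY)
  (P : R.-ker Yt ~> Yt) (dYd : probability Yt R) (CA rho : R)
  (Y : nat -> Om -> Yt)
  (H : 'rV[R]_d -> Yt -> 'rV[R]_d) (h : 'rV[R]_d -> 'rV[R]_d)
  (N Ns : 'rV[R]_d -> R) (xi kappa Lh : R) (wstar w0 : 'rV[R]_d)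
  (Ca : R) (alpha T : nat -> R) (tm : nat -> nat) :
  (* Markov chain with transition kernel P *)
  markov_chain Pr P Y ->
  (forall y, P y setT = 1%E) ->
  (* unique stationary distribution dYd *)
  stationary P dYd ->
  (forall q : probability Yt R, stationary P q ->
     forall A, measurable A -> q A = dYd A) ->
  (* geometric mixing: int |P^n(y,.) - dYd| = 2 sup_A |P^n(y,A) - dYd(A)| <= CA rho^n *)
  0 <= rho < 1 ->
  (forall y n A, measurable A ->
     (2%:E * `| kpow P n y A - dYd A | <= (CA * rho ^+ n)%:E)%E) ->
  (* h(w) = E_{y ~ dYd}[H(w,y)] *)
  (forall w i, measurable_fun setT (fun y => H w y 0 i)) ->
  (forall w i, (h w 0 i)%:E = (\int[dYd]_y (H w y 0 i)%:E)%E) ->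
  (* contraction of h w.r.t. the norm N, fixed point wstar *)
  is_norm N -> 0 <= kappa < 1 ->
  (forall w w', N (h w - h w') <= kappa * N (w - w')) ->
  h wstar = wstar ->
  (* Lipschitz H, bounded H(0,.) *)
  (forall w w' y, N (H w y - H w' y) <= Lh * N (w - w')) ->
  (exists B : R, forall y, N (H 0 y) <= B) ->
  (* the smoothing norm Ns and xi > 0 *)
  is_norm Ns -> smooth_wrt (fun x => Ns x ^+ 2 / 2) Ns -> 0 < xi ->
  (* learning rates and anchors *)
  0 < Ca -> lr_setup Ca alpha T -> is_anchors alpha T tm ->
  exists C : R, exists m0 : nat, forall (om : Om) (m : nat), (m0 <= m)%N ->
    moreau_norm N Ns xi (z1 H alpha w0 tm (fun t => Y t om) m)
      <= T m ^+ 2 * C *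
         (moreau_norm N Ns xi (iterates H alpha w0 (fun t => Y t om) (tm m) - wstar) + 1).
Proof.
move=> _ _ _ _ _ _ _ _ hN _ _ _ HL [B HB] hNs _ xi0 Ca0 hlr hanc.
have [apos Tpos aT T2] := @lr_facts _ Ca alpha T Ca0 hlr.
have [k [k0 Hk]] := @moreau_ge _ _ N Ns xi hN hNs xi0.
set L := `|Lh| + 1.
set B2 := `|Lh| * N wstar + Num.max B 0 + N wstar.
have L0 : 0 < L by rewrite /L ltr_wpDl.
have B20 : 0 <= B2.
  have q1 := mulr_ge0 (normr_ge0 Lh) (Nge0 hN wstar). have q2 := Nge0 hN wstar. have q3 : 0 <= Num.max B 0 by rewrite le_max lexx orbT. rewrite /B2; lra.
pose M := 64 * Ca ^+ 2 * L ^+ 2.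
exists (8 * L ^+ 2 * (k + B2 / L)), (Num.Def.trunc M).+1.
move=> om m hm.
set y := fun t => Y t om.
have m1 : (1 <= m)%N by exact: leq_trans hm.
have hlt := @tm_lt _ alpha T tm Tpos hanc m.
have hS := @S_le2T _ alpha T tm Tpos aT hanc m m1.
set S := \sum_(tm m <= t < tm m.+1) alpha t in hS.
have S0 : 0 <= S by apply: sumr_ge0 => i _; exact: ltW.
have TL : 4 * L * T m <= 1.
  have hM : M <= nat3 m.
    apply: le_trans (ltW (truncnS_gt M)) _.
    have : ((Num.Def.trunc M).+1%:R : R) <= m%:R by rewrite ler_nat.
    rewrite /nat3; lra.
  have hT2m := T2 m m1.
  have Tm0 := Tpos m.
  have c2 : 0 < Ca ^+ 2 by rewrite exprn_gt0.
  have hT2 : T m ^+ 2 * M <= 4 * Ca ^+ 2.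
    apply: le_trans hT2m; apply: ler_wpM2l => //; exact: sqr_ge0.
  have e : T m ^+ 2 * M = (4 * Ca ^+ 2) * (4 * L * T m) ^+ 2 by rewrite /M; ring.
  have c4 : 0 < 4 * Ca ^+ 2 by rewrite mulr_gt0.
  have hT3 : (4 * Ca ^+ 2) * (4 * L * T m) ^+ 2 <= (4 * Ca ^+ 2) * 1 by rewrite mulr1 -e.
  rewrite ler_pM2l // in hT3.
  have p0 : 0 <= 4 * L * T m by rewrite !mulr_ge0 // ltW.
  nra.
have hLS : L * S <= 1 / 2.
  have := ler_wpM2l (ltW L0) hS; lra.
have hmain := @main_est _ _ _ H alpha w0 y N hN wstar Lh B HL HB (fun t => ltW (apos t)) _ _ (ltnW hlt) hLS.
rewrite /= -/S -/L -/B2 in hmain.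
have hz := @moreau_le _ _ N Ns xi hN hNs xi0 (z1 H alpha w0 tm y m).
rewrite /z1 in hz *.
apply: le_trans hz _; apply: le_trans hmain _.
set e := iterates H alpha w0 y (tm m) - wstar.
set mo := moreau_norm N Ns xi e.
have mo0 : 0 <= mo by rewrite /mo /moreau_norm sqrtr_ge0.
have hke := Hk e; rewrite -/mo in hke.
have hD : N e + B2 / L <= (k + B2 / L) * (mo + 1).
  have : 0 <= k * 1 by rewrite mulr1 ltW.
  have : 0 <= B2 / L * mo by rewrite mulr_ge0 // divr_ge0 // ltW.
  lra.
have hS2 : S ^+ 2 <= 4 * T m ^+ 2.
  have -> : 4 * T m ^+ 2 = (2 * T m) ^+ 2 by ring.
  rewrite ler_sqr ?nnegrE //; rewrite mulr_ge0 // ltW //.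
have D0 : 0 <= N e + B2 / L by rewrite addr_ge0 ?(Nge0 hN) // divr_ge0 // ltW.
have L20 : 0 <= 2 * L ^+ 2 by rewrite mulr_ge0 // sqr_ge0.
apply: (@le_trans _ _ (2 * L ^+ 2 * (4 * T m ^+ 2) * (N e + B2 / L))).
  by apply: ler_wpM2r => //; apply: ler_wpM2l.
apply: (@le_trans _ _ (2 * L ^+ 2 * (4 * T m ^+ 2) * ((k + B2 / L) * (mo + 1)))).
  apply: ler_wpM2l => //; rewrite mulr_ge0 // mulr_ge0 // sqr_ge0.
all: try done.
have -> : 2 * L ^+ 2 * (4 * T m ^+ 2) * ((k + B2 / L) * (mo + 1)) = T m ^+ 2 * (8 * L ^+ 2 * (k + B2 / L)) * (mo + 1) by ring.
by [].
Qed.
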